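(* Let $(S,* )$ be a finite cycle set with structure monoid $M$ and permutation group $\mathcal G$. Then there is a (unique) binary operation $+$ on $\mathcal G$ such that $\psi(g+h)=\psi(g)+\psi(h)$ for all $g,h\in M$, and $(\mathcal G,+)$ is an abelian group; i.e. the commutative structure $(M,+)$ induces an abelian group structure on $\mathcal G$ compatible with $\psi\colon M\to\mathcal G$.
   Context: A cycle set is a set $S$ with a binary operation $*$ such that each $t\mapsto s*t$ is bijective and $(s*t)*(s*u)=(t*s)*(t*u)$ for all $s,t,u$. Write $S=\{s_1,\dots,s_n\}$, let $\psi(s)\in\mathfrak S_n$ satisfy $s_i*s_j=s_{\psi(s_i)(j)}$, and $\mathcal G=\langle\psi(s_1),\dots,\psi(s_n)\rangle\le\mathfrak S_n$. The structure group $G$ (resp. monoid $M$) has group (resp. monoid) presentation $\langle S\mid s(s*t)=t(t*s),\ s\neq t\rangle$; $M$ embeds in $G$. For $\sigma\in\mathfrak S_n$, $P_\sigma$ is the matrix with $1$ at $(i,\sigma(i))$. The assignment $s_i\mapsto\mathrm{diag}(1,\dots,q,\dots,1)P_{\psi(s_i)}$ ($q$ an indeterminate, in position $i$) extends to a faithful representation $\Theta$ of $G$ by monomial matrices; write $\Theta(g)=D_gP_{\psi(g)}$ with $D_g=\mathrm{diag}(q^{c_1},\dots,q^{c_n})$, which defines $\psi(g)\in\mathcal G$ (so $\psi(gh)=\psi(h)\circ\psi(g)$). The map $g\mapsto(c_1,\dots,c_n)$ is a bijection $G\to\mathbb Z^n$ restricting to a bijection $M\to\mathbb N^n$. For $g,h\in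 G$, $g+h$ denotes the unique element of $G$ with $D_{g+h}=D_gD_h$; $(G,+)$ is an abelian group and $M$ is closed under $+$. *)

(* Defs.v *)
From HB Require Import structures.
From mathcomp Require Import all_boot all_fingroup.
Set Implicit Arguments. Unset Strict Implicit. Unset Printing Implicit Defensive.
Local Open Scope group_scope.

Record cycleSet (S : finType) := CycleSet {
  cop : S -> S -> S;
  cop_bij : forall s, bijective (cop s);
  cop_cycle : forall s t u, cop (cop s t) (cop s u) = cop (cop t s) (cop t u)
}.

Definition psi (S : finType) (C : cycleSet S) (s : S) : {perm S} :=
  perm (bij_inj (cop_bij C s)).

Definition permGroup (S : finType) (C : cycleSet S) : {set {perm S}} :=
  <<[set psi C s | s : S]>>.

(* Monomial matrices D_c P_sigma, D_c = diag(q^{c_i}), P_sigma with 1 at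
   (i, sigma i), are encoded as pairs (c, sigma).  Product:
   D_a P_s * D_b P_t = D_{i |-> a i + b (s i)} P_{t o s};
   in mathcomp, (s * t) x = t (s x), so t o s is the perm s * t. *)
Definition mono_mul (S : finType) (x y : {ffun S -> nat} * {perm S}) :=
  ([ffun i => x.1 i + y.1 (x.2 i)], x.2 * y.2).

(* Theta(s) = diag(1,..,q,..,1) P_{psi s}  (q in position s). *)
Definition theta_gen (S : finType) (C : cycleSet S) (s : S) :=
  ([ffun i => (i == s) : nat], psi C s).

(* Theta of a word s_1 ... s_k, i.e. of an element of the structure monoid M
   (every element of M is the image of such a word). *)
Fixpoint theta (S : finType) (C : cycleSet S) (w : seq S)
  : {ffun S -> nat} * {perm S} :=
  match w with
  | [::] => ([ffun _ => 0%N], 1)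
  | s :: w' => mono_mul (theta_gen C s) (theta C w')
  end.

Definition expv (S : finType) (C : cycleSet S) (w : seq S) := (theta C w).1.
Definition psiM (S : finType) (C : cycleSet S) (w : seq S) := (theta C w).2.

(* w represents g + h when D_w = D_u D_v, i.e. exponent vectors add. *)
Definition is_sum (S : finType) (C : cycleSet S) (u v w : seq S) :=
  expv C w = [ffun i => expv C u i + expv C v i].

Definition psi_compatible (S : finType) (C : cycleSet S)
  (add : {perm S} -> {perm S} -> {perm S}) :=
  forall u v w : seq S, is_sum C u v w -> psiM C w = add (psiM C u) (psiM C v).

Definition abelian_group_on (T : Type) (A : T -> Prop) (add : T -> T -> T) :=
  [/\ forall x y, A x -> A y -> A (add x y),
      forall x y z, A x -> A y -> A z -> add x (add y z) = add (add x y) z,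
      forall x y, A x -> A y -> add x y = add y x
    & exists2 e, A e &
        (forall x, A x -> add e x = x) /\
        (forall x, A x -> exists2 y, A y & add x y = e)].

(* Main.v *)
Require Import Defs.
From mathcomp Require Import all_boot all_fingroup.
Set Implicit Arguments. Unset Strict Implicit. Unset Printing Implicit Defensive.

Lemma psiE (S : finType) (C : cycleSet S) s t : psi C s t = cop C s t.
Proof. by rewrite /psi permE. Qed.

Lemma expv_nil (S : finType) (C : cycleSet S) : expv C [::] = [ffun _ => 0].
Proof. by []. Qed.

Lemma psiM_nil (S : finType) (C : cycleSet S) : psiM C [::] = 1%g.
Proof. by []. Qed.

Lemma expv_cons (S : finType) (C : cycleSet S) s w :
  expv C (s :: w) = [ffun i => (i == s) + expv C w (psi C s i)].
Proof. by rewrite /expv /= /mono_mul /theta_gen /=; apply/ffunP=> i; rewrite !ffunE. Qed.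

Lemma psiM_cons (S : finType) (C : cycleSet S) s w :
  psiM C (s :: w) = (psi C s * psiM C w)%g.
Proof. by []. Qed.

Lemma expv_cat (S : finType) (C : cycleSet S) u v :
  expv C (u ++ v) = [ffun i => expv C u i + expv C v (psiM C u i)].
Proof.
elim: u => [|s u IH].
  by apply/ffunP=> i; rewrite !ffunE perm1.
apply/ffunP=> i; rewrite cat_cons !expv_cons !ffunE IH ffunE psiM_cons permM.

by rewrite addnA.
Qed.

Lemma psiM_cat (S : finType) (C : cycleSet S) u v :
  psiM C (u ++ v) = (psiM C u * psiM C v)%g.
Proof.
elim: u => [|s u IH]; first by rewrite cat0s psiM_nil mul1g.
by rewrite cat_cons psiM_cons IH mulgA.
Qed.

Lemma psiM_in (S : finType) (C : cycleSet S) w : psiM C w \in permGroup C.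
Proof.
elim: w => [|s w IH]; first by rewrite psiM_nil group1.
by rewrite psiM_cons groupM // mem_gen //; apply/imsetP; exists s.
Qed.

Lemma sum_comp (S : finType) (f : S -> nat) (p : {perm S}) :
  \sum_i f (p i) = \sum_i f i.
Proof. by rewrite [RHS](reindex_inj (@perm_inj _ p)). Qed.

Lemma sum_ind (S : finType) (s : S) : \sum_i ((i == s) : nat) = 1.
Proof.
by rewrite (bigD1 s) //= eqxx big1 // => i /negbTE ->.
Qed.

Lemma sum_expv (S : finType) (C : cycleSet S) w : \sum_i expv C w i = size w.
Proof.
elim: w => [|s w IH]; first by rewrite big1 // => i _; rewrite ffunE.
rewrite expv_cons (eq_bigr (fun i => (i == s) + expv C w (psi C s i))); last by move=> i _; rewrite ffunE.
by rewrite big_split /= sum_ind sum_comp IH.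
Qed.

Lemma le_sum (S : finType) (c : S -> nat) i : c i <= \sum_j c j.
Proof. by rewrite (bigD1 i) //= leq_addr. Qed.

Lemma ex_expv (S : finType) (C : cycleSet S) n : forall c : {ffun S -> nat},
  \sum_i c i <= n ->
  (exists w, expv C w = c) /\ (forall x, 0 < c x -> exists w, expv C (x :: w) = c).
Proof.
have part1 : forall c : {ffun S -> nat},
   (forall x, 0 < c x -> exists w, expv C (x :: w) = c) -> exists w, expv C w = c.
  move=> c H2; case: (pickP (fun x => 0 < c x)) => [x Hx | H0].
    by have [w Hw] := H2 x Hx; exists (x :: w).
  exists [::]; apply/ffunP => i; rewrite ffunE; have := H0 i; simpl.
  by case: (c i).
elim: n => [|n IH] c Hc.
  have H2 : forall x, 0 < c x -> exists w, expv C (x :: w) = c.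
    move=> x Hx; have := le_sum c x; rewrite leqn0 in Hc; rewrite (eqP Hc).
    by rewrite leqNgt Hx.
  by split => //; apply: part1.
have H2 : forall x, 0 < c x -> exists w, expv C (x :: w) = c.
  move=> x Hx.
  pose c' := [ffun i => c ((psi C x)^-1 i)%g - ((psi C x)^-1 i == x)%g].
  have Hs : \sum_i c' i < \sum_i c i.
    rewrite -(sum_comp _ (psi C x)).
    rewrite (eq_bigr (fun i => c i - (i == x))); last by move=> i _; rewrite ffunE permK.
    rewrite [X in _ < X](eq_bigr (fun i => (c i - (i == x)) + (i == x))); last first.
      move=> i _; case: eqP => [->|_]; last by rewrite subn0 addn0.
      by rewrite subnK.
    by rewrite big_split /= sum_ind addn1.
  have [[w Hw] _] := IH c' (leq_trans (leq_trans Hs Hc) (leqnn _)).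
  exists w; apply/ffunP => i; rewrite expv_cons ffunE Hw ffunE permK.
  case: eqP => [->|_]; last by rewrite subn0.
  by rewrite addnC subnK.
by split => //; apply: part1.
Qed.

Lemma ex_word (S : finType) (C : cycleSet S) (c : {ffun S -> nat}) :
  exists w, expv C w = c.
Proof. by case: (ex_expv C (leqnn (\sum_i c i))). Qed.

Lemma ex_word_cons (S : finType) (C : cycleSet S) (c : {ffun S -> nat}) x :
  0 < c x -> exists w, expv C (x :: w) = c.
Proof. by move=> H; case: (ex_expv C (leqnn (\sum_i c i))) => _ H2; apply: H2. Qed.

Lemma size_eq (S : finType) (C : cycleSet S) w1 w2 :
  expv C w1 = expv C w2 -> size w1 = size w2.
Proof. by move=> E; rewrite -(sum_expv C w1) -(sum_expv C w2) E. Qed.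

Lemma cons_inj (S : finType) (C : cycleSet S) s w1 w2 :
  expv C (s :: w1) = expv C (s :: w2) -> expv C w1 = expv C w2.
Proof.
move=> E; apply/ffunP => j; have := congr1 (fun f : {ffun S -> nat} => f ((psi C s)^-1 j)%g) E.
by rewrite !expv_cons !ffunE permKV => /addnI.
Qed.

Lemma cons_congr (S : finType) (C : cycleSet S) s w1 w2 :
  expv C w1 = expv C w2 -> expv C (s :: w1) = expv C (s :: w2).
Proof. by move=> E; rewrite !expv_cons E. Qed.

Lemma psi_cycle (S : finType) (C : cycleSet S) s t :
  (psi C s * psi C (cop C s t))%g = (psi C t * psi C (cop C t s))%g.
Proof. by apply/permP => i; rewrite !permM !psiE cop_cycle. Qed.

Lemma expv_psiM (S : finType) (C : cycleSet S) n : forall w1 w2,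
  size w1 <= n -> expv C w1 = expv C w2 -> psiM C w1 = psiM C w2.
Proof.
elim: n => [|n IH] w1 w2 Hsz He; have Hs := size_eq He.
  by case: w1 Hsz Hs He => // _; case: w2.
case: w1 Hsz Hs He => [|s w1] Hsz Hs He; first by case: w2 Hs He.
case: w2 Hs He => [|t w2] // Hs He.
rewrite ltnS in Hsz.
have [Est|st] := eqVneq s t; first subst t.
  by rewrite !psiM_cons (IH w1 w2 Hsz (cons_inj He)).
have Hst : 0 < expv C w1 (cop C s t).
  have := congr1 (fun f : {ffun S -> nat} => f t) He; rewrite !expv_cons !ffunE eqxx psiE.
  by rewrite eq_sym (negbTE st) add0n => ->.
have Hts : 0 < expv C w2 (cop C t s).
  have := congr1 (fun f : {ffun S -> nat} => f s) He; rewrite !expv_cons !ffunE eqxx psiE.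
  by rewrite (negbTE st) add0n psiE => <-.
have [u Hu] := ex_word_cons C Hst.
have [u' Hu'] := ex_word_cons C Hts.
have E1 := IH _ _ Hsz (esym Hu).
have Hs2 : size w2 <= n by move: Hs Hsz => /= [<-].
have E2 := IH _ _ Hs2 (esym Hu').
have Huu : expv C u = expv C u'.
  have He2 : expv C (s :: cop C s t :: u) = expv C (t :: cop C t s :: u').
    by rewrite (cons_congr s Hu) (cons_congr t Hu').
  apply/ffunP => j.
  pose i := ((psi C s * psi C (cop C s t))^-1 j)%g.
  have := congr1 (fun f : {ffun S -> nat} => f i) He2.
  rewrite !expv_cons !ffunE; try rewrite !ffunE.
  have -> : (psi C s i == cop C s t) = (i == t) by rewrite -psiE (inj_eq perm_inj).
  have -> : (psi C t i == cop C t s) = (i == s) by rewrite -psiE (inj_eq perm_inj).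
  have -> : psi C (cop C t s) (psi C t i) = psi C (cop C s t) (psi C s i).
    by rewrite !psiE cop_cycle.
  have -> : psi C (cop C s t) (psi C s i) = j.
    by rewrite /i -permM permKV.
  by rewrite addnCA => /addnI /addnI.
have E3 : psiM C u = psiM C u'.
  apply: IH Huu.
  have Hsz1 : size w1 <= n := Hsz.
  by move: Hsz1; rewrite -(size_eq Hu) /=; apply: ltnW.
by rewrite !psiM_cons E1 E2 !psiM_cons E3 !mulgA psi_cycle.
Qed.

Lemma expv_psiM' (S : finType) (C : cycleSet S) w1 w2 :
  expv C w1 = expv C w2 -> psiM C w1 = psiM C w2.
Proof. exact: (@expv_psiM S C (size w1) w1 w2 (leqnn _)). Qed.

Lemma ex_wordb (S : finType) (C : cycleSet S) (c : {ffun S -> nat}) :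
  exists w, expv C w == c.
Proof. by have [w Hw] := ex_word C c; exists w; rewrite Hw. Qed.

Definition W (S : finType) (C : cycleSet S) (c : {ffun S -> nat}) : seq S :=
  xchoose (ex_wordb C c).

Lemma WE (S : finType) (C : cycleSet S) c : expv C (W C c) = c.
Proof. exact: (eqP (xchooseP (ex_wordb C c))). Qed.

Lemma G1 (S : finType) (C : cycleSet S) u v w :
  is_sum C u v w ->
  psiM C w = (psiM C u * psiM C (W C [ffun i => expv C v ((psiM C u)^-1 i)%g]))%g.
Proof.
move=> H; rewrite -psiM_cat; apply: expv_psiM'.
rewrite H expv_cat WE; apply/ffunP => i; by rewrite !ffunE permK.
Qed.

Lemma is_sumC (S : finType) (C : cycleSet S) u v w :
  is_sum C u v w -> is_sum C v u w.
Proof. by rewrite /is_sum => ->; apply/ffunP => i; rewrite !ffunE addnC. Qed.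

Lemma K (S : finType) (C : cycleSet S) u1 v1 w1 u2 v2 w2 :
  psiM C u1 = psiM C u2 -> psiM C v1 = psiM C v2 ->
  is_sum C u1 v1 w1 -> is_sum C u2 v2 w2 -> psiM C w1 = psiM C w2.
Proof.
move=> Eu Ev H1 H2.
pose m := W C [ffun i => expv C u2 i + expv C v1 i].
have Hm : is_sum C u2 v1 m by rewrite /is_sum WE.
rewrite (G1 H1) Eu -(G1 Hm) (G1 (is_sumC Hm)) Ev.
by rewrite -(G1 (is_sumC H2)).
Qed.

Lemma word_prod (S : finType) (C : cycleSet S) n (c : 'I_n -> {perm S}) :
  (forall i, c i \in [set psi C s | s : S]) -> exists w, psiM C w = (\prod_i c i)%g.
Proof.
elim: n c => [|n IH] c Hc; first by exists [::]; rewrite big_ord0.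
have [w Hw] := IH (fun i => c (lift ord0 i)) (fun i => Hc _).
have /imsetP [s _ Es] := Hc ord0.
by exists (s :: w); rewrite big_ord_recl psiM_cons Hw Es.
Qed.

Lemma ex_rep (S : finType) (C : cycleSet S) (g : {perm S}) :
  exists w, (g \in permGroup C) ==> (psiM C w == g).
Proof.
case: (boolP (g \in permGroup C)) => [/gen_prodgP [n [c Hc ->]] | _]; last by exists [::].
by have [w Hw] := word_prod Hc; exists w; rewrite Hw eqxx.
Qed.

Definition rep (S : finType) (C : cycleSet S) g := xchoose (ex_rep C g).

Lemma repE (S : finType) (C : cycleSet S) g : g \in permGroup C -> psiM C (rep C g) = g.
Proof. by move=> Hg; have := xchooseP (ex_rep C g); move=> /implyP /(_ Hg) /eqP. Qed.

Definition addG (S : finType) (C : cycleSet S) (g h : {perm S}) :=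
  psiM C (W C [ffun i => expv C (rep C g) i + expv C (rep C h) i]).

Lemma addG_compat (S : finType) (C : cycleSet S) : psi_compatible C (addG C).
Proof.
move=> u v w H; rewrite /addG; symmetry; apply: (@K S C (rep C (psiM C u)) (rep C (psiM C v)) _ u v w _ _ _ H).
- by rewrite repE // psiM_in.
- by rewrite repE // psiM_in.
- by rewrite /is_sum WE.
Qed.

Theorem mainTheorem13 (S : finType) (C : cycleSet S) :
  exists add : {perm S} -> {perm S} -> {perm S},
    [/\ psi_compatible C add,
        abelian_group_on (fun g => g \in permGroup C) add
      & forall add' : {perm S} -> {perm S} -> {perm S},
          psi_compatible C add' ->
          forall g h, g \in permGroup C -> h \in permGroup C ->
            add' g h = add g h].
Proof.
exists (addG C); split.
- exact: addG_compat.
- split.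
  + by move=> x y _ _; apply: psiM_in.
  + move=> x y z Hx Hy Hz.
    set a := expv C (rep C x); set b := expv C (rep C y); set c := expv C (rep C z).
    have Hyz : is_sum C (rep C y) (rep C z) (W C [ffun i => b i + c i]) by rewrite /is_sum WE.
    have Hxy : is_sum C (rep C x) (rep C y) (W C [ffun i => a i + b i]) by rewrite /is_sum WE.
    have H1 : is_sum C (rep C x) (W C [ffun i => b i + c i]) (W C [ffun i => a i + (b i + c i)]).
      by rewrite /is_sum !WE; apply/ffunP => i; rewrite !ffunE.
    have H2 : is_sum C (W C [ffun i => a i + b i]) (rep C z) (W C [ffun i => a i + (b i + c i)]).
      by rewrite /is_sum !WE; apply/ffunP => i; rewrite !ffunE addnA.
    have E1 := addG_compat Hyz; rewrite (repE Hy) (repE Hz) in E1.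
    have E2 := addG_compat Hxy; rewrite (repE Hx) (repE Hy) in E2.
    have E3 := addG_compat H1; rewrite (repE Hx) E1 in E3.
    have E4 := addG_compat H2; rewrite (repE Hz) E2 in E4.
    by rewrite -E3 -E4.
  + move=> x y _ _; rewrite /addG; congr (psiM C (W C _)).
    by apply/ffunP => i; rewrite !ffunE addnC.
  + exists 1%g; first exact: group1.
    split.
    * move=> x Hx.
      have Hs : is_sum C [::] (rep C x) (rep C x).
        by rewrite /is_sum; apply/ffunP => i; rewrite !ffunE.
      have E := addG_compat Hs; rewrite psiM_nil (repE Hx) in E.
      by rewrite -E.
    * move=> x Hx.
      set u := rep C x; set v := rep C (x^-1)%g.
      pose v' := W C [ffun i => expv C v (psiM C u i)].
      exists (psiM C v'); first exact: psiM_in.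
      rewrite -[x in addG C x _](repE Hx) -(addG_compat (w := u ++ v)).
        by rewrite psiM_cat /u /v !repE ?groupV // mulgV.
      by rewrite /is_sum expv_cat WE; apply/ffunP => i; rewrite !ffunE.
- move=> add' Hc g h Hg Hh.
  have H : is_sum C (rep C g) (rep C h) (W C [ffun i => expv C (rep C g) i + expv C (rep C h) i]).
    by rewrite /is_sum WE.
  by rewrite -(repE Hg) -(repE Hh) -(Hc _ _ _ H) (addG_compat H).
Qed.
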